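(* Let $i\in[n-2]$ and $a\in\mathbb{Q}[x_1,\dots,x_n][S_n^{i\searrow}]$, and let $y\in\{x_1,\dots,x_n\}$. Then $a\odot R_i(y)=a\odot(y-\theta_{i+1})R_{i+1}(y)$.
   Context: Permutations in one-line notation, $wt_{i,j}$ is $w$ with positions $i<j$ swapped, $\ell$ the number of inversions, $u\lessdot w$ iff $w=ut_{i,j}$ with $\ell(w)=\ell(u)+1$. $S_n^{i\searrow}=\{v\in S_n:v(i+1)>\dots>v(n)\}$, and $\mathbb{Q}[x_1,\dots,x_n][S_n^{i\searrow}]$ is the span of $S_n^{i\searrow}$ over the polynomial ring. Fomin–Kirillov algebra $\mathcal{E}_n$: generators $d_{i,j}$ ($1\le i<j\le n$), relations $d_{i,j}^2=0$; $d_{i,j}d_{j,k}=d_{i,k}d_{i,j}+d_{j,k}d_{i,k}$ and $d_{j,k}d_{i,j}=d_{i,j}d_{i,k}+d_{i,k}d_{j,k}$ ($i<j<k$); $d_{i,j}d_{k,l}=d_{k,l}d_{i,j}$ ($i,j,k,l$ distinct). Right action: $w\odot d_{i,j}=wt_{i,j}$ if $wt_{i,j}\lessdot w$, else $0$; $\mathbb{Q}[x_1,\dots,x_n]\otimes\mathcal{E}_n$ acts on $\mathbb{Q}[x_1,\dots,x_n][S_n]$ by $(fw)\odot(g\otimes e)=fg(w\odot e)$. $B_{i,j}=d_{1,j}+\dots+d_{i,j}$; $R_i(y)=(y+B_{i,i+1})(y+B_{i,i+2})\cdots(y+B_{i,n})$. Dunkl element $\theta_i=-\sum_{j<i}d_{j,i}+\sum_{j>i}d_{i,j}$.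 *)

(* Defs.v *)
From HB Require Import structures.
From mathcomp Require Import all_boot all_order all_algebra all_fingroup.
From mathcomp Require Import mpoly.
Set Implicit Arguments. Unset Strict Implicit. Unset Printing Implicit Defensive.
Import GRing.Theory.
Local Open Scope ring_scope.

(* Polynomial ring Q[x_1,...,x_n]; variable x_k is 'X_(k-1) (0-based ordinals). *)
Definition Pol (n : nat) := {mpoly rat[n]}.

(* Q[x_1,...,x_n][S_n]: free module with basis S_n; an element a is the
   coefficient function w |-> a(w).  Permutations w : 'S_n are read in one-line
   notation w(1)...w(n), positions/values being 0-based ordinals. *)
Definition Mod (n : nat) := {ffun 'S_n -> Pol n}.

Definition ninv n (w : 'S_n) : nat :=
  #|[set p : 'I_n * 'I_n | (p.1 < p.2)%N && (w p.2 < w p.1)%N]|.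

(* w t_{i,j}: w with positions i and j swapped, i.e. (w t)(k) = w (t k) *)
Definition swapp n (w : 'S_n) (i j : 'I_n) : 'S_n := (tperm i j * w)%g.

Definition covby n (u w : 'S_n) : bool :=
  [exists i : 'I_n, exists j : 'I_n,
     [&& (i < j)%N, w == swapp u i j & ninv w == (ninv u).+1]].

Definition bvec n (f : Pol n) (w : 'S_n) : Mod n :=
  [ffun v => if v == w then f else 0].

(* right action of the generator d_{i,j} (0-based ordinals) extended
   Q[x]-linearly: (f w) . d_{i,j} = f (w t_{i,j}) if w t_{i,j} <. w, else 0 *)
Definition dact_ord n (i j : 'I_n) (a : Mod n) : Mod n :=
  \sum_(w : 'S_n) (if covby (swapp w i j) w then bvec (a w) (swapp w i j) else 0).

(* d_{i,j} with the paper's 1-based indices i, j in [n] *)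
Definition dact n (i j : nat) (a : Mod n) : Mod n :=
  match (insub i.-1 : option 'I_n), (insub j.-1 : option 'I_n) with
  | Some i', Some j' => dact_ord i' j' a
  | _, _ => 0
  end.

Definition pmul n (f : Pol n) (a : Mod n) : Mod n := [ffun w => f * a w].

Definition Bact n (i j : nat) (a : Mod n) : Mod n :=
  \sum_(1 <= k < i.+1) dact k j a.

Definition yBact n (y : Pol n) (i j : nat) (a : Mod n) : Mod n :=
  pmul y a + Bact i j a.

(* a . R_i(y),  R_i(y) = (y + B_{i,i+1}) (y + B_{i,i+2}) ... (y + B_{i,n});
   right action: the leftmost factor acts first *)
Definition Ract n (y : Pol n) (i : nat) (a : Mod n) : Mod n :=
  foldl (fun b j => yBact y i j b) a (iota i.+1 (n - i)).

Definition thetaact n (m : nat) (a : Mod n) : Mod n :=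
  - (\sum_(1 <= j < m) dact j m a) + \sum_(m.+1 <= j < n.+1) dact m j a.

Definition ythetaact n (y : Pol n) (m : nat) (a : Mod n) : Mod n :=
  pmul y a - thetaact m a.

(* S_n^{i\searrow} (i 1-based): v(i+1) > ... > v(n); with 0-based positions,
   v p > v q whenever i <= p < q *)
Definition desc_tail n (i : nat) (v : 'S_n) : bool :=
  [forall p : 'I_n, forall q : 'I_n, ((i <= p)%N && (p < q)%N) ==> (v q < v p)%N].

Definition in_span_desc n (i : nat) (a : Mod n) : Prop :=
  forall v : 'S_n, a v != 0 -> desc_tail i v.

(* Main.v *)
Require Import Defs.
From HB Require Import structures.
From mathcomp Require Import all_boot all_order all_algebra all_fingroup.
From mathcomp Require Import mpoly.
From mathcomp Require Import zify.
Set Implicit Arguments. Unset Strict Implicit. Unset Printing Implicit Defensive.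
Import GRing.Theory.
Local Open Scope ring_scope.

Section Count.
Variable n : nat.
Implicit Types u v w : 'S_n.

Lemma swappE u (p q x : 'I_n) : swapp u p q x = u (tperm p q x).
Proof. by rewrite /swapp permM. Qed.

Lemma swappK u (p q : 'I_n) : swapp (swapp u p q) p q = u.
Proof. by rewrite /swapp mulgA tperm2 mul1g. Qed.

Lemma ninv_sum u : ninv u = (\sum_(a : 'I_n) \sum_(b : 'I_n) (((a < b) && (u b < u a))%N : nat))%N.
Proof.
rewrite /ninv -sum1dep_card pair_bigA /= big_mkcond /=. 
by apply: eq_big => // x _; case: ifP.

Qed.

Lemma sum_pick (x : 'I_n) (P : 'I_n -> bool) :
  (\sum_(a : 'I_n) (((a == x) && P a) : nat))%N = P x.
Proof.
rewrite (bigD1 x) //= eqxx big1 ?addn0 // => a /negbTE -> //.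
Qed.

Lemma sum2_pick1 (x : 'I_n) (Q : 'I_n -> 'I_n -> bool) :
  (\sum_(a : 'I_n) \sum_(b : 'I_n) (((a == x) && Q a b) : nat))%N =
  (\sum_(b : 'I_n) (Q x b : nat))%N.
Proof.
rewrite (bigD1 x) //= [X in (_ + X)%N]big1 ?addn0.
  by apply: eq_bigr => b _; rewrite eqxx.
by move=> a /negbTE ha; apply: big1 => b _; rewrite ha.
Qed.

Lemma sum2_pick2 (x : 'I_n) (Q : 'I_n -> 'I_n -> bool) :
  (\sum_(a : 'I_n) \sum_(b : 'I_n) (((b == x) && Q a b) : nat))%N =
  (\sum_(a : 'I_n) (Q a x : nat))%N.
Proof.
apply: eq_bigr => a _; exact: (sum_pick x (Q a)).
Qed.

Lemma ninv_swap u (p q : 'I_n) : (p < q)%N -> (u q < u p)%N ->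
  ninv u = (ninv (swapp u p q) + 1 +
     2 * #|[set r : 'I_n | [&& (p < r)%N, (r < q)%N, (u q < u r)%N & (u r < u p)%N]]|)%N.
Proof.
move=> pq uqp.
set t := tperm p q.
have E1 : ninv (swapp u p q) = (\sum_(a : 'I_n) \sum_(b : 'I_n)
    (((t a < t b) && (u b < u a))%N : nat))%N.
  rewrite ninv_sum (reindex_inj (@perm_inj _ t)) /=.
  apply: eq_bigr => a _.
  rewrite (reindex_inj (@perm_inj _ t)) /=.
  by apply: eq_bigr => b _; rewrite !swappE !tpermK.
pose f a b := (u b < u a)%N.
pose G (a b : 'I_n) := ((((a == q) && ((b == p) && f a b)) : nat) +
              (((a == q) && (((p < b) && (b < q))%N && f a b)) : nat) +
              (((b == p) && (((p < a) && (a < q))%N && f a b)) : nat))%N.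
pose H (a b : 'I_n) := ((((a == p) && ((b == q) && f a b)) : nat) +
              (((a == p) && (((p < b) && (b < q))%N && f a b)) : nat) +
              (((b == q) && (((p < a) && (a < q))%N && f a b)) : nat))%N.
have pw : forall a b : 'I_n, ((((a < b)%N && f a b) : nat) + G a b =
                      (((t a < t b)%N && f a b) : nat) + H a b)%N.
  move=> a b; rewrite /G /H /t.
  case: (f a b); rewrite ?andbT ?andbF /=; last by [].
  have ta : forall c : 'I_n, nat_of_ord (t c) = if nat_of_ord c == nat_of_ord p then nat_of_ord q
      else if nat_of_ord c == nat_of_ord q then nat_of_ord p else nat_of_ord c.
    move=> c; rewrite /t; case: tpermP => [->|->|cp cq]; rewrite ?eqxx //.
      by case: eqP.
    by case: eqP => [/val_inj//|_]; case: eqP => [/val_inj//|].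
  move: (ta a) (ta b).
  rewrite -[a == p]/(nat_of_ord a == nat_of_ord p) -[a == q]/(nat_of_ord a == nat_of_ord q).
  rewrite -[b == p]/(nat_of_ord b == nat_of_ord p) -[b == q]/(nat_of_ord b == nat_of_ord q).
  have : (nat_of_ord p < nat_of_ord q)%N by [].
  move: (nat_of_ord (t a)) (nat_of_ord (t b)) (nat_of_ord a) (nat_of_ord b) (nat_of_ord p) (nat_of_ord q).
  move=> x y A B P Q.
  case: (A =P P); case: (A =P Q); case: (B =P P); case: (B =P Q); move=> /= *; lia.
have S : (ninv u + \sum_a \sum_b G a b = ninv (swapp u p q) + \sum_a \sum_b H a b)%N.
  rewrite ninv_sum E1 -!big_split; apply: eq_bigr => a _.
  rewrite -!big_split; apply: eq_bigr => b _; exact: pw.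
have sG : (\sum_a \sum_b G a b = f q p + \sum_(r : 'I_n) ((((p < r) && (r < q))%N && f q r) : nat)
    + \sum_(r : 'I_n) ((((p < r) && (r < q))%N && f r p) : nat))%N.
  rewrite /G; under eq_bigr do rewrite !big_split.
  by rewrite !big_split /= !sum2_pick1 sum2_pick2 !sum_pick.
have sH : (\sum_a \sum_b H a b = f p q + \sum_(r : 'I_n) ((((p < r) && (r < q))%N && f p r) : nat)
    + \sum_(r : 'I_n) ((((p < r) && (r < q))%N && f r q) : nat))%N.
  rewrite /H; under eq_bigr do rewrite !big_split.
  by rewrite !big_split /= !sum2_pick1 sum2_pick2 !sum_pick.
rewrite sG sH {sG sH} in S.
have -> : #|[set r : 'I_n | [&& (p < r)%N, (r < q)%N, (u q < u r)%N & (u r < u p)%N]]| =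
   (\sum_(r : 'I_n) (([&& (p < r)%N, (r < q)%N, (u q < u r)%N & (u r < u p)%N]) : nat))%N.
  by rewrite -sum1dep_card big_mkcond; apply: eq_bigr => r _; case: ifP.
have pw2 : forall r : 'I_n,
  (((((p < r) && (r < q))%N && (u r < u q)%N) : nat) + ((((p < r) && (r < q))%N && (u p < u r)%N) : nat)
   + (([&& (p < r)%N, (r < q)%N, (u q < u r)%N & (u r < u p)%N]) : nat) + (([&& (p < r)%N, (r < q)%N, (u q < u r)%N & (u r < u p)%N]) : nat) =
   ((((p < r) && (r < q))%N && (u r < u p)%N) : nat) + ((((p < r) && (r < q))%N && (u q < u r)%N) : nat))%N.
  move=> r; case pr: (p < r)%N; case rq: (r < q)%N => //=.
  have h1 : (u r : nat) <> u p.
    by move=> /val_inj /perm_inj e; move: pr; rewrite e ltnn.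
  have h2 : (u r : nat) <> u q.
    by move=> /val_inj /perm_inj e; move: rq; rewrite e ltnn.
  lia.
have T := @eq_bigr nat 0%N addn 'I_n (index_enum _) xpredT _ _ (fun r _ => pw2 r).
rewrite !big_split /= in T.
have fqp : f q p = false by rewrite /f ltnNge ltnW.
have fpq : f p q = true by [].
rewrite fqp fpq in S.
rewrite /f in S.
move: S T => /= S T.
set A := \sum_(r < n) _ in S T *.
lia.
Qed.

Lemma card0P (P : pred 'I_n) : (#|[set r | P r]| == 0%N) = [forall r, ~~ P r].
Proof.
rewrite cards_eq0; apply/eqP/forallP => [H r|H].
  apply/negP => Pr; have : r \in [set r | P r] by rewrite inE.
  by rewrite H inE.
by apply/setP => r; rewrite inE in_set0; exact/negbTE.
Qed.

Lemma ord_neq_val (x y : 'I_n) : x != y -> (x : nat) <> y.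
Proof. by move=> /eqP xy e; apply: xy; apply: val_inj. Qed.

Lemma perm_val_neq u (x y : 'I_n) : x != y -> (u x : nat) <> u y.
Proof. by move=> /eqP xy /val_inj /perm_inj e. Qed.

Lemma covby_swap u (p q : 'I_n) : (p < q)%N ->
  covby (swapp u p q) u = (u q < u p)%N &&
    [forall r : 'I_n, ~~ [&& (p < r)%N, (r < q)%N, (u q < u r)%N & (u r < u p)%N]].
Proof.
move=> pq.
have pnq : p != q by apply/eqP => e; move: pq; rewrite e ltnn.
apply/idP/idP.
  case/existsP => i /existsP [j /and3P [_ _ /eqP e]].
  case: (ltngtP (u q) (u p)) => [uqp|upq|e2].
  - rewrite /=; rewrite (ninv_swap pq uqp) in e.
    have H0 : forall x y : nat, (x + 1 + 2 * y = x.+1 -> y = 0)%N by move=> *; lia.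
    rewrite -card0P; apply/eqP; exact: (H0 _ _ e).
  - have h : (swapp u p q q < swapp u p q p)%N by rewrite !swappE tpermL tpermR.
    have := ninv_swap pq h; rewrite swappK; lia.
  - by exfalso; apply: (perm_val_neq pnq (esym e2)).
case/andP => uqp nb; apply/existsP; exists p; apply/existsP; exists q.
rewrite pq swappK eqxx /= (ninv_swap pq uqp).
move: nb; rewrite -card0P => /eqP ->; apply/eqP; lia.
Qed.

Definition asc (v : 'S_n) (p q : 'I_n) : bool := (v p < v q)%N &&
  [forall r : 'I_n, ~~ [&& (p < r)%N, (r < q)%N, (v p < v r)%N & (v r < v q)%N]].

Lemma dact_ordE0 (p q : 'I_n) (a : Mod n) v :
  dact_ord p q a v = if covby v (swapp v p q) then a (swapp v p q) else 0.
Proof.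
rewrite /dact_ord sum_ffunE (bigD1 (swapp v p q)) //= big1 ?addr0.
  by rewrite swappK; case: ifP => _; rewrite !ffunE ?eqxx.
move=> w hw; case: ifP => _; rewrite !ffunE //.
case: eqP => // e; exfalso; move/eqP: hw; apply.
by rewrite e swappK.
Qed.

Lemma dact_ordE (p q : 'I_n) (a : Mod n) v : (p < q)%N ->
  dact_ord p q a v = if asc v p q then a (swapp v p q) else 0.
Proof.
move=> pq; rewrite dact_ordE0.
rewrite -{1}(swappK v p q) covby_swap // !swappE tpermL tpermR /asc.
congr (if _ then _ else _); congr (_ && _); apply: eq_forallb => r.
case pr: (p < r)%N; case rq: (r < q)%N => //=.
have rp : r != p by apply/eqP => e; move: pr; rewrite e ltnn.
have rq' : r != q by apply/eqP => e; move: rq; rewrite e ltnn.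
by rewrite swappE tpermD // eq_sym.
Qed.

End Count.

Section Lin.
Variable n : nat.
Implicit Types a b : Mod n.

Lemma dact_ordD (p q : 'I_n) a b : dact_ord p q (a + b) = dact_ord p q a + dact_ord p q b.
Proof. by apply/ffunP => v; rewrite ?ffunE !dact_ordE0 ?ffunE; case: ifP; rewrite ?addr0. Qed.

Lemma dact_ordN (p q : 'I_n) a : dact_ord p q (- a) = - dact_ord p q a.
Proof. by apply/ffunP => v; rewrite ?ffunE !dact_ordE0 ?ffunE; case: ifP; rewrite ?oppr0. Qed.

Lemma dact_ordB (p q : 'I_n) a b : dact_ord p q (a - b) = dact_ord p q a - dact_ord p q b.
Proof. by rewrite dact_ordD dact_ordN. Qed.

Lemma dact_ord0 (p q : 'I_n) : dact_ord p q 0 = 0.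
Proof. by apply/ffunP => v; rewrite ?ffunE !dact_ordE0 ?ffunE; case: ifP. Qed.

Lemma dact_ord_sum (p q : 'I_n) (I : Type) (r : seq I) (P : pred I) (F : I -> Mod n) :
  dact_ord p q (\sum_(x <- r | P x) F x) = \sum_(x <- r | P x) dact_ord p q (F x).
Proof.
apply/ffunP => v; rewrite dact_ordE0 !sum_ffunE; case: ifP => c.
  by apply: eq_bigr => x _; rewrite dact_ordE0 c.
by rewrite big1 // => x _; rewrite dact_ordE0 c.
Qed.

Lemma dact_ordM (p q : 'I_n) (y : Pol n) a : dact_ord p q (pmul y a) = pmul y (dact_ord p q a).
Proof. by apply/ffunP => v; rewrite ?ffunE !dact_ordE0 ?ffunE; case: ifP; rewrite ?mulr0. Qed.

End Lin.

Lemma tperm_val n (x y z : 'I_n) :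
  tperm x y z = if z == x then y else if z == y then x else z.
Proof.
case: tpermP => [->|->|zx zy]; rewrite ?eqxx //.
  by case: eqP => // ->.
by case: eqP => // _; case: eqP.
Qed.

Lemma neq_ord n (x y : 'I_n) : (x : nat) <> y -> (x == y) = false.
Proof. by move=> h; apply/eqP => e; apply: h; rewrite e. Qed.

Lemma eq_ord n (x y : 'I_n) : (x : nat) = y -> x = y.
Proof. by move=> h; apply: val_inj. Qed.

Section Comb.
Variables (n i : nat).
Implicit Types a b : Mod n.

Lemma desc_tailP (v : 'S_n) :
  reflect (forall p q : 'I_n, (i <= p)%N -> (p < q)%N -> (v q < v p)%N) (desc_tail i v).
Proof.
apply: (iffP forallP) => [H p q ip pq | H p].
  by move: (H p) => /forallP /(_ q) /implyP; apply; rewrite ip pq.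
by apply/forallP => q; apply/implyP => /andP [ip pq]; exact: H.
Qed.

Lemma E0 (p q : 'I_n) b : (p : nat) = i -> (i.+2 <= q)%N -> in_span_desc i b ->
  dact_ord p q b = 0.
Proof.
move=> pi iq Tb; apply/ffunP => v; rewrite dact_ordE; last lia.
rewrite ffunE; case A: (asc v p q) => //.
case: (eqVneq (b (swapp v p q)) 0) => // /Tb /desc_tailP D.
have hr : (i.+1 < n)%N by have := ltn_ord q; lia.
pose r := Ordinal hr.
have h1 := D p r (ltac:(rewrite pi //)) (ltac:(rewrite /= pi //)).
have h2 := D r q (ltac:(rewrite /=; lia)) (ltac:(rewrite /=; lia)).
rewrite !swappE !tperm_val eqxx (neq_ord (x := r) (y := p)) ?(neq_ord (x := r) (y := q)) /= in h1 h2;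
  try (rewrite /= ?pi; lia).
rewrite (neq_ord (x := q) (y := p)) /= ?eqxx in h2; last lia.
move/andP: A => [_ /forallP /(_ r) /negP []].
by apply/and4P; split; rewrite /= ?pi //; lia.
Qed.


Lemma Tpres (k j : 'I_n) b : (k < i)%N -> (i <= j)%N -> in_span_desc i b ->
  in_span_desc i (dact_ord k j b).
Proof.
move=> ki ij Tb v; rewrite dact_ordE; last lia.
case A: (asc v k j); last by rewrite eqxx.
move=> /Tb /desc_tailP D; apply/desc_tailP => p q ip pq.
move/andP: A => [vkj /forallP F].
have vE : forall x, v x = swapp v k j (tperm k j x) by move=> x; rewrite swappE tpermK.
move: D vkj F vE; set u := swapp v k j => D vkj F vE.
rewrite !vE !tperm_val in vkj *.
rewrite eqxx (neq_ord (x := j) (y := k)) /= ?eqxx in vkj; last lia.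
rewrite (neq_ord (x := p) (y := k)); last lia.
rewrite (neq_ord (x := q) (y := k)); last lia.
case: (eqVneq p j) => [pj|pj].
  subst p; rewrite (neq_ord (x := q) (y := j)) /=; last lia.
  have := D j q ij pq; lia.
case: (eqVneq q j) => [qj|qj] /=.
  subst q.
  have := D p j ip pq.
  move: (F p); rewrite !vE !tperm_val (neq_ord (x := p) (y := k)) ?(negbTE pj) /=; last lia.
  rewrite !eqxx (neq_ord (x := j) (y := k)) /= ?eqxx; last lia.
  have : (u k : nat) <> u p by apply: perm_val_neq; apply/eqP => e; move: ki ip; rewrite e; lia.
  have : (k < p)%N by lia.
  have : (p < j)%N by [].
  move=> h1 h2 h3 h4 h5.
  move: h4; rewrite h1 h2 /= => h4.
  lia.
exact: D.
Qed.

Lemma ZZ (p q : 'I_n) b : (p < q)%N -> dact_ord p q (dact_ord p q b) = 0.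
Proof.
move=> pq; apply/ffunP => v; rewrite !dact_ordE // ffunE.
case A: (asc v p q) => //; case B: (asc _ p q) => //.
move/andP: A => [h1 _]; move/andP: B => [h2 _].
move: h2; rewrite !swappE tpermL tpermR; lia.
Qed.

Lemma Kcomm (k p0 p1 : 'I_n) a : (k < i)%N -> (p0 : nat) = i -> (p1 : nat) = i.+1 ->
  in_span_desc i a ->
  dact_ord p0 p1 (dact_ord k p0 a) = dact_ord k p1 (dact_ord p0 p1 a).
Proof.
move=> ki h0 h1 Ta; apply/ffunP => v.
have kp0 : (k < p0)%N by lia.
have kp1 : (k < p1)%N by lia.
have p01 : (p0 < p1)%N by lia.
have nk0 : (k == p0) = false by apply: neq_ord; lia.
have nk1 : (k == p1) = false by apply: neq_ord; lia.
have n0k : (p0 == k) = false by apply: neq_ord; lia.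
have n1k : (p1 == k) = false by apply: neq_ord; lia.
have n01 : (p0 == p1) = false by apply: neq_ord; lia.
have n10 : (p1 == p0) = false by apply: neq_ord; lia.
rewrite !dact_ordE //.
have eU : swapp (swapp v p0 p1) k p0 = swapp (swapp v k p1) p0 p1.
  apply/permP => x; rewrite !swappE !tperm_val.
  case: (eqVneq x k) => [e|xk]; first subst x.
    by do 3 rewrite ?eqxx ?nk0 ?nk1 ?n0k ?n1k ?n01 ?n10 /=.
  case: (eqVneq x p0) => [e|x0]; first subst x.
    by do 3 rewrite ?eqxx ?nk0 ?nk1 ?n0k ?n1k ?n01 ?n10 /=.
  case: (eqVneq x p1) => [e|x1]; first subst x.
    by do 3 rewrite ?eqxx ?nk0 ?nk1 ?n0k ?n1k ?n01 ?n10 /=.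
  by do 3 rewrite ?eqxx ?nk0 ?nk1 ?n0k ?n1k ?n01 ?n10 ?(negbTE xk) ?(negbTE x0) ?(negbTE x1) /=.
rewrite eU.
set u := swapp (swapp v k p1) p0 p1.
case: (eqVneq (a u) 0) => [->|nz]; first by rewrite !if_same.
move/Ta/desc_tailP: nz => D.
have := D p0 p1 (ltac:(lia)) p01.
rewrite /u !swappE !tperm_val; do 3 rewrite ?eqxx ?nk0 ?nk1 ?n0k ?n1k ?n01 ?n10 /=; move=> vp0k.
have A2 : asc (swapp v k p1) p0 p1.
  apply/andP; split.
    by rewrite !swappE !tperm_val; do 3 rewrite ?eqxx ?nk0 ?nk1 ?n0k ?n1k ?n01 ?n10 /=.
  by apply/forallP => r; apply/negP => /and4P [a1 a2 _ _]; lia.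
have wE : forall r : 'I_n, r != p0 -> r != p1 -> swapp v p0 p1 r = v r.
  by move=> r r0 r1; rewrite swappE tpermD // eq_sym.
have wk' : swapp v p0 p1 k = v k by rewrite wE ?nk0 ?nk1.
have wp0 : swapp v p0 p1 p0 = v p1 by rewrite swappE tpermL.
have B : asc v p0 p1 && asc (swapp v p0 p1) k p0 = asc v k p1.
  apply/idP/idP.
    move=> /andP [/andP [vp01 _] /andP [wk /forallP F1]].
    move: wk; rewrite !swappE !tperm_val; do 3 rewrite ?eqxx ?nk0 ?nk1 ?n0k ?n1k ?n01 ?n10 /=; move=> wk.
    apply/andP; split => //.
    apply/forallP => r; apply/negP => /and4P [kr rp1 vkr vrp1].
    case: (eqVneq r p0) => [e|rp0].
      by subst r; lia.
    have rp1' : r != p1 by apply/eqP => e; subst r; lia.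
    move: (F1 r); rewrite (wE r rp0 rp1') wk' wp0.
    have rp0' : (r < p0)%N by have := ord_neq_val rp0; lia.
    by rewrite kr rp0' vkr vrp1.
  move=> /andP [vkp1 /forallP F2].
  apply/andP; split.
    apply/andP; split; first lia.
    by apply/forallP => r; apply/negP => /and4P [a1 a2 _ _]; lia.
  apply/andP; split.
    by rewrite !swappE !tperm_val; do 3 rewrite ?eqxx ?nk0 ?nk1 ?n0k ?n1k ?n01 ?n10 /=.
  apply/forallP => r; apply/negP => /and4P [kr rp0 wkr wrp0].
  have rp0' : r != p0 by apply/eqP => e; subst r; lia.
  have rp1' : r != p1 by apply/eqP => e; subst r; lia.
  move: wkr wrp0; rewrite (wE r rp0' rp1') wk' wp0 => wkr wrp0.
  move: (F2 r); rewrite kr wkr /=.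
  have -> : (r < p1)%N by lia.
  by rewrite wrp0.
rewrite A2; move: B.
by case: (asc v p0 p1); case: (asc (swapp v p0 p1) k p0); case: (asc v k p1).
Qed.

End Comb.

Section Assembly.
Variable n : nat.
Implicit Types a b : Mod n.

Lemma dactE' (k j : nat) (hk : (k < n)%N) (hj : (j < n)%N) a :
  dact k.+1 j.+1 a = dact_ord (Ordinal hk) (Ordinal hj) a.
Proof.
rewrite /dact /=.
have -> : insub k = Some (Ordinal hk) by rewrite (insubT (fun x => x < n)%N hk); congr Some; apply: val_inj.
have -> : insub j = Some (Ordinal hj) by rewrite (insubT (fun x => x < n)%N hj); congr Some; apply: val_inj.
by [].
Qed.

Lemma yBactE (y : Pol n) (i J : nat) (hJ : (J < n)%N) a : (i <= n)%N ->
  yBact y i J.+1 a = pmul y a + \sum_(k : 'I_n | (k < i)%N) dact_ord k (Ordinal hJ) a.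
Proof.
move=> iN; rewrite /yBact /Bact; congr (_ + _).
rewrite big_add1 /= big_mkord (big_ord_widen n (fun k => dact k.+1 J.+1 a) iN).
apply: eq_bigr => k _; rewrite (dactE' (ltn_ord k) hJ).
by rewrite (_ : Ordinal (ltn_ord k) = k) //; apply: val_inj.
Qed.

Lemma pmulD (y : Pol n) a b : pmul y (a + b) = pmul y a + pmul y b.
Proof. by apply/ffunP => v; rewrite !ffunE mulrDr. Qed.

Lemma pmulN (y : Pol n) a : pmul y (- a) = - pmul y a.
Proof. by apply/ffunP => v; rewrite !ffunE mulrN. Qed.

Lemma pmulB (y : Pol n) a b : pmul y (a - b) = pmul y a - pmul y b.
Proof. by rewrite pmulD pmulN. Qed.

Variable i : nat.

Lemma isd0 : in_span_desc i (0 : Mod n).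
Proof. by move=> v; rewrite ffunE eqxx. Qed.

Lemma isdD a b : in_span_desc i a -> in_span_desc i b -> in_span_desc i (a + b).
Proof.
move=> Ta Tb v; rewrite ffunE; case: (eqVneq (a v) 0) => [->|/Ta //].
by rewrite add0r => /Tb.
Qed.

Lemma isdN a : in_span_desc i a -> in_span_desc i (- a).
Proof. by move=> Ta v; rewrite ffunE oppr_eq0 => /Ta. Qed.

Lemma isdM (y : Pol n) a : in_span_desc i a -> in_span_desc i (pmul y a).
Proof.
move=> Ta v; rewrite ffunE; case: (eqVneq (a v) 0) => [->|/Ta //].
by rewrite mulr0 eqxx.
Qed.

Lemma isd_sum (I : Type) (r : seq I) (P : pred I) (F : I -> Mod n) :
  (forall x, P x -> in_span_desc i (F x)) -> in_span_desc i (\sum_(x <- r | P x) F x).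
Proof.
move=> H; apply: (big_ind (fun b => in_span_desc i b)); [exact: isd0|exact: isdD|exact: H].
Qed.

Lemma yBact_pres (y : Pol n) (j : nat) b : (i < j)%N -> (j <= n)%N ->
  in_span_desc i b -> in_span_desc i (yBact y i j b).
Proof.
move=> ij jn Tb; case: j ij jn => [//|J] ij jn.
rewrite (yBactE y (i := i) (ltac:(lia) : (J < n)%N)); last lia.
apply: isdD; first exact: isdM.
by apply: isd_sum => k ki; apply: Tpres => //=; lia.
Qed.

Lemma yBactS (y : Pol n) (j : nat) b : yBact y i.+1 j b = yBact y i j b + dact i.+1 j b.
Proof. by rewrite /yBact /Bact big_nat_recr //= addrA. Qed.

Lemma tail_eq (y : Pol n) (s : seq nat) b : in_span_desc i b ->
  all (fun j => (i.+3 <= j) && (j <= n))%N s ->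
  foldl (fun b j => yBact y i.+1 j b) b s = foldl (fun b j => yBact y i j b) b s.
Proof.
elim: s b => [//|j s IH] b Tb /= /andP [/andP [h1 h2] hs].
have -> : yBact y i.+1 j b = yBact y i j b.
  rewrite yBactS; case: j h1 h2 {hs} => [//|J] h1 h2.
  rewrite (dactE' (ltac:(lia) : (i < n)%N) (ltac:(lia) : (J < n)%N)) (@E0 n i) ?addr0 //=; lia.
apply: IH => //; apply: yBact_pres => //; lia.
Qed.

End Assembly.

Theorem lemma4p21 (n : nat) (i : nat) (a : Mod n) (k : 'I_n) :
  (1 <= i)%N -> (i <= n - 2)%N -> in_span_desc i a ->
  Ract ('X_k : Pol n) i a = Ract ('X_k : Pol n) i.+1 (ythetaact ('X_k : Pol n) i.+1 a).
Proof.
move=> i1 i2 Ta.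
set y := ('X_k : Pol n).
have h0 : (i < n)%N by lia.
have h1 : (i.+1 < n)%N by lia.
pose o0 := Ordinal h0.
pose o1 := Ordinal h1.
pose E := dact_ord o0 o1.
have iN : (i <= n)%N by lia.
have S1 : ythetaact y i.+1 a = yBact y i i.+1 a - E a.
  rewrite /ythetaact /thetaact.
  rewrite (big_ltn (ltac:(lia) : (i.+2 < n.+1)%N)).
  have Z : \sum_(i.+3 <= j < n.+1) dact i.+1 j a = 0.
    rewrite big_nat_cond big1 // => j /andP [/andP [j1 j2] _]; case: j j1 j2 => [//|J] j1 j2.
    rewrite (dactE' h0 (ltac:(lia) : (J < n)%N)) (@E0 n i) //=; lia.
  rewrite Z.
  rewrite (dactE' h0 h1) addr0 /yBact /Bact.
  by rewrite opprD opprK addrA.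
rewrite S1 /Ract.
set m := (n - i.+2)%N.
have -> : (n - i = m.+2)%N by rewrite /m; lia.
have -> : (n - i.+1 = m.+1)%N by rewrite /m; lia.
rewrite /=.
set v0 := yBact y i i.+1 a.
have Tv0 : in_span_desc i v0 by apply: yBact_pres => //; lia.
have ES : forall b, dact i.+1 i.+2 b = E b by move=> b; rewrite (dactE' h0 h1).
have yB2 : forall b, yBact y i i.+2 b = pmul y b + \sum_(k0 : 'I_n | (k0 < i)%N) dact_ord k0 o1 b.
  by move=> b; rewrite (yBactE y h1 b iN).
have KEY : E v0 = yBact y i i.+2 (E a).
  rewrite /v0 (yBactE y h0 a iN) yB2 /E dact_ordD dact_ordM dact_ord_sum.
  congr (_ + _); apply: eq_bigr => k0 k0i.
  by apply: (@Kcomm n i).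
have ZE : E (E a) = 0 by apply: ZZ.
have -> : yBact y i.+1 i.+2 (v0 - E a) = yBact y i i.+2 v0.
  rewrite yBactS ES /E dact_ordB -/E KEY ZE subr0.
  rewrite !yB2 pmulB; under eq_bigr do rewrite dact_ordB.
  by rewrite sumrB addrACA !subrK.

symmetry; apply: tail_eq.
  apply: yBact_pres => //; lia.
apply/allP => j; rewrite mem_iota => /andP [j1 j2]; apply/andP; split; lia.
Qed.
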